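(* Let $G$ be a plane graph whose set of vertices has no accumulation point in $\mathbb{R}^2$ and which has bounded vertex degrees, and suppose $G$ is hyperbolic and weakly non-amenable. If every face of $G$ is contained inside a geodetic cycle, then $G$ has bounded codegree, i.e. $\Delta(G^* )<\infty$.
   Context: A plane graph is a graph with a fixed embedding in $\mathbb{R}^2$ with no two edges crossing. A face is a connected component of $\mathbb{R}^2$ minus the image of the graph; its length $|F|$ is the number of edges in its boundary (the vertices and edges mapped into its closure); it is bounded if its length is finite. $\Delta(G^* ):=\sup\{|F| : F\text{ a bounded face}\}$. A set is inside a cycle $C$ if each of its points lies on $C$ or in the bounded component of $\mathbb{R}^2\setminus C$. For vertices $x,y$ on a cycle $C$, $xCy$ and $yCx$ are the two arcs of $C$ between them; $C$ is a geodetic cycle if for every $x,y\in C$ at least one of $xCy,yCx$ is a geodesic of $G$. For finite $S\subset V(G)$, $\partial S$ is the set of vertices outside $S$ adjacent to a vertex of $S$; $G$ is weakly non-amenable if there is a monotone increasing diverging $f:\mathbb{N}\to\mathbb{N}$ with $|S|\le f(|\partial S|)$ for all non-empty finite $S$. A graph is hyperbolic if there is $\delta\ge0$ such that in each connected component every geodetic triangle (three vertices joined pairwise by geodesics) has each side in the $\delta$-neighbourhood of the union of the other two. *)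

(* Defs.v *)
From HB Require Import structures.
From mathcomp Require Import all_boot all_order all_algebra.
From mathcomp Require Import all_classical all_reals.
From mathcomp Require Import topology Rstruct Rstruct_topology.
From Stdlib Require Import Reals List.
Import ListNotations.

Set Implicit Arguments.
Unset Strict Implicit.
Unset Printing Implicit Defensive.

Local Open Scope classical_set_scope.

Definition plane_pt : Type := (R * R)%type.

Definition unit_I : set R := [set t | (0 <= t <= 1)%R].

Section Graph.
Variables (V E : Type) (src tgt : E -> V).

Definition simple_graph : Prop :=
  (forall e, src e <> tgt e) /\
  (forall e e', (src e = src e' /\ tgt e = tgt e') \/
                (src e = tgt e' /\ tgt e = src e') -> e = e').

Definition adj (u v : V) : Prop :=
  exists e, (src e = u /\ tgt e = v) \/ (src e = v /\ tgt e = u).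

Definition bounded_degree : Prop :=
  exists D : nat, forall v : V, exists l : list E,
    (length l <= D)%coq_nat /\ forall e, (src e = v \/ tgt e = v) -> In e l.

Fixpoint is_walk (p : list V) : Prop :=
  match p with
  | [] => False
  | [_] => True
  | x :: ((y :: _) as q) => adj x y /\ is_walk q
  end.

Definition is_geodesic (p : list V) : Prop :=
  is_walk p /\
  forall x0 (q : list V), is_walk q -> hd x0 q = hd x0 p ->
    last q x0 = last p x0 -> (length p <= length q)%coq_nat.

Definition dist_le (u v : V) (n : nat) : Prop :=
  exists p : list V, is_walk p /\ hd u p = u /\ last p u = v /\
    (length p <= n.+1)%coq_nat.

(* hyperbolicity: every geodetic triangle is delta-thin (measured on vertices;
   distances are integers, so delta may be taken in nat). *)
Definition hyperbolic : Prop :=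
  exists delta : nat,
    forall x0 (P Q S : list V), is_geodesic P -> is_geodesic Q -> is_geodesic S ->
      last P x0 = hd x0 Q -> last Q x0 = hd x0 S -> last S x0 = hd x0 P ->
      forall v, In v P -> exists w, (In w Q \/ In w S) /\ dist_le v w delta.

Definition weakly_non_amenable : Prop :=
  exists f : nat -> nat,
    (forall m n, (m <= n)%N -> (f m <= f n)%N) /\
    (forall M, exists n, (M <= f n)%N) /\
    forall S B : list V, S <> [] -> NoDup S -> NoDup B ->
      (forall w, In w B <-> (~ In w S /\ exists u, In u S /\ adj u w)) ->
      (length S <= f (length B))%N.

Definition is_cycle (n : nat) (c : nat -> V) : Prop :=
  (3 <= n)%N /\
  (forall i j, (i < n)%N -> (j < n)%N -> c i = c j -> i = j) /\
  (forall i, (i < n)%N -> adj (c i) (c ((i.+1) %% n))).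

(* the arc xCy from x = c i to y = c j, as a walk *)
Definition cycle_arc (n : nat) (c : nat -> V) (i j : nat) : list V :=
  map (fun k => c ((i + k) %% n)) (seq 0 (((j + n - i) %% n).+1)).

Definition geodetic_cycle (n : nat) (c : nat -> V) : Prop :=
  is_cycle n c /\
  forall i j, (i < n)%N -> (j < n)%N ->
    is_geodesic (cycle_arc n c i j) \/ is_geodesic (cycle_arc n c j i).

Definition cycle_edge (n : nat) (c : nat -> V) (e : E) : Prop :=
  exists i, (i < n)%N /\
    ((src e = c i /\ tgt e = c ((i.+1) %% n)) \/
     (tgt e = c i /\ src e = c ((i.+1) %% n))).

Variables (pos : V -> plane_pt) (arc : E -> R -> plane_pt).

Definition plane_embedding : Prop :=
  (forall u v, pos u = pos v -> u = v) /\
  (forall e, {within unit_I, continuous (arc e)}) /\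
  (forall e s t, unit_I s -> unit_I t -> arc e s = arc e t -> s = t) /\
  (forall e, arc e 0%R = pos (src e) /\ arc e 1%R = pos (tgt e)) /\
  (forall v e t, unit_I t -> arc e t = pos v -> v = src e \/ v = tgt e) /\
  (forall e e' s t, e <> e' -> unit_I s -> unit_I t -> arc e s = arc e' t ->
     exists v, arc e s = pos v /\ (v = src e \/ v = tgt e) /\
               (v = src e' \/ v = tgt e')).

Definition no_vertex_accumulation : Prop :=
  forall p : plane_pt, ~ limit_point (range pos) p.

Definition graph_image : set plane_pt :=
  [set p | (exists v, p = pos v) \/ (exists e t, unit_I t /\ p = arc e t)].

Definition edge_image (e : E) : set plane_pt := arc e @` unit_I.

Definition is_face (F : set plane_pt) : Prop :=
  exists p, ~ graph_image p /\ F = connected_component (~` graph_image) p.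

Definition face_boundary_edges (F : set plane_pt) : set E :=
  [set e | edge_image e `<=` closure F].

Definition finite_list_set (T : Type) (A : set T) : Prop :=
  exists l : list T, forall x, A x -> In x l.

Definition at_most (T : Type) (A : set T) (N : nat) : Prop :=
  exists l : list T, (length l <= N)%coq_nat /\ forall x, A x -> In x l.

(* Delta(G^* ) < oo : the lengths of bounded faces are uniformly bounded *)
Definition bounded_codegree : Prop :=
  exists N : nat, forall F, is_face F ->
    finite_list_set (face_boundary_edges F) ->
    at_most (face_boundary_edges F) N.

Definition bounded_point_set (A : set plane_pt) : Prop :=
  exists M : R, forall q, A q -> (Rabs q.1 <= M /\ Rabs q.2 <= M)%R.

Definition cycle_image (n : nat) (c : nat -> V) : set plane_pt :=
  [set p | (exists i, (i < n)%N /\ p = pos (c i)) \/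
           (exists e, cycle_edge n c e /\ edge_image e p)].

Definition inside_cycle (n : nat) (c : nat -> V) (A : set plane_pt) : Prop :=
  forall p, A p -> cycle_image n c p \/
    (~ cycle_image n c p /\
     bounded_point_set (connected_component (~` cycle_image n c) p)).

End Graph.

(* Main.v *)
From HB Require Import structures.
Require Import Defs.
From Stdlib Require Import Reals List.
From mathcomp Require Import all_boot all_classical all_reals.
From mathcomp Require Import topology Rstruct Rstruct_topology.
From Stdlib Require Import Lra Classical.
From mathcomp Require Import all_order all_algebra finmap normedtype zify.
Import ListNotations.
Import numFieldNormedType.Exports.
Import Order.TTheory GRing.Theory Num.Theory.

Set Implicit Arguments.
Unset Strict Implicit.
Lemma modn_arc_le (a b n : nat) : (a < n)%N -> (b < n)%N -> (a <= b)%N ->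
  ((b + n - a) %% n = b - a)%N.
Proof.
move=> ha hb hab.
have -> : (b + n - a = (b - a) + n)%N by lia.
rewrite modnDr modn_small //; lia.
Qed.

Lemma modn_arc_gt (a b n : nat) : (a < n)%N -> (b < n)%N -> (b < a)%N ->
  ((b + n - a) %% n = b + n - a)%N.
Proof. move=> ha hb hab; rewrite modn_small //; lia. Qed.

Lemma classical_filter (T : Type) (l : list T) (P : T -> Prop) :
  exists l', (forall x, In x l' <-> In x l /\ P x) /\ (List.length l' <= List.length l)%coq_nat.
Proof.
elim: l => [|a l [l' [H1 H2]]]; first by exists [] => /=; split => //; firstorder.
case: (Classical_Prop.classic (P a)) => Pa.
- exists (a :: l'); split => [x|/=]; last lia.
  simpl; rewrite H1; split; first by case=> [<-|[]]; tauto.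
  by case=> [[<-|Hx] Px]; tauto.
- exists l'; split => [x|/=]; last lia.
  rewrite H1 /=; split; first tauto.
  by case=> [[<-|Hx] Px]; tauto.
Qed.

Lemma classical_nodup (T : Type) (l : list T) :
  exists l', NoDup l' /\ (forall x, In x l' <-> In x l) /\ (List.length l' <= List.length l)%coq_nat.
Proof.
elim: l => [|a l [l' [H0 [H1 H2]]]]; first by exists []; split; [constructor|split => //].
case: (Classical_Prop.classic (In a l')) => Ha.
- exists l'; split => //; split => [x|/=]; last lia.
  rewrite H1 /=; split; first tauto.
  by case=> [<-|]; [rewrite -H1|].
- exists (a :: l'); split; first by constructor.
  split => [x|/=]; last lia.
  by simpl; rewrite H1.
Qed.

Lemma classical_filter_nodup (T : Type) (l : list T) (P : T -> Prop) :
  exists l', NoDup l' /\ (forall x, In x l' <-> In x l /\ P x) /\ (List.length l' <= List.length l)%coq_nat.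
Proof.
have [l1 [H1 H2]] := classical_filter l P.
have [l2 [N2 [H3 H4]]] := classical_nodup l1.
exists l2; split => //; split => [x|]; last lia.
by rewrite H3 H1.
Qed.

Section Comb.
Variables (V E : Type) (src tgt : E -> V).

Lemma adj_sym u v : adj src tgt u v -> adj src tgt v u.
Proof. by case=> e [[h1 h2]|[h1 h2]]; exists e; [right|left]. Qed.

Lemma is_walk_cons2 x y p : is_walk src tgt (x :: y :: p) <-> adj src tgt x y /\ is_walk src tgt (y :: p).
Proof. by []. Qed.

Lemma is_walk_app p q : is_walk src tgt p -> is_walk src tgt q ->
  (forall x0, adj src tgt (List.last p x0) (hd x0 q)) -> is_walk src tgt (p ++ q).
Proof.
move: q; elim: p => [//|a p IH] q Hp Hq Hl.
case: p IH Hp Hl => [|b p] IH Hp Hl.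
  case: q Hq Hl => [//|c q] Hq Hl /=; split => //; exact: (Hl a).
case: Hp => Hab Hw; split => //; exact: (IH q).
Qed.

Lemma is_walk_snoc p x : is_walk src tgt p ->
  (forall x0, adj src tgt (List.last p x0) x) -> is_walk src tgt (p ++ [x]).
Proof. move=> Hp Hl; apply: is_walk_app => //. Qed.

Lemma last_rev_hd (p : list V) x0 : List.last (List.rev p) x0 = hd x0 p.
Proof.
case: p => [//|a p]; exact: (List.last_last (List.rev p) a x0).
Qed.

Lemma is_walk_rev p : is_walk src tgt p -> is_walk src tgt (List.rev p).
Proof.
elim: p => [//|a p IH] /=.
case: p IH => [|b p] IH; first by [].
move=> [Hab Hw]; apply: is_walk_snoc; first exact: IH.
by move=> x0; rewrite last_rev_hd /=; apply: adj_sym.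
Qed.

Lemma hd_rev_last (p : list V) x0 : hd x0 (List.rev p) = List.last p x0.
Proof. by rewrite -{2}(List.rev_involutive p) last_rev_hd. Qed.

End Comb.

Section Cyc.
Variables (V E : Type) (src tgt : E -> V).

Lemma walk_map_seq (g : nat -> V) m : forall a,
  (forall k, (a <= k)%N -> (k < a + m)%N -> adj src tgt (g k) (g k.+1)) ->
  is_walk src tgt (List.map g (List.seq a m.+1)).
Proof.
elim: m => [//|m IH] a H.
change (is_walk src tgt (g a :: List.map g (List.seq a.+1 m.+1))).
have -> : List.map g (List.seq a.+1 m.+1) = g a.+1 :: List.map g (List.seq a.+2 m) by [].
split; first by apply: H; lia.
have := IH a.+1; apply => k h1 h2; apply: H; lia.
Qed.

Lemma last_map_seq (g : nat -> V) m x0 : List.last (List.map g (List.seq 0 m.+1)) x0 = g m.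
Proof.
rewrite List.seq_S List.map_app /=; exact: List.last_last.
Qed.

Lemma in_map_seq (g : nat -> V) m w : In w (List.map g (List.seq 0 m.+1)) <->
  exists k, (k <= m)%N /\ w = g k.
Proof.
rewrite List.in_map_iff; split.
- case=> k [<- /List.in_seq Hk]; exists k; split => //; lia.
- case=> k [Hk ->]; exists k; split => //; apply/List.in_seq; lia.
Qed.

Definition arcd n i j := ((j + n - i) %% n)%N.

Lemma arc_len n (c : nat -> V) i j : List.length (cycle_arc n c i j) = (arcd n i j).+1.
Proof. by rewrite /cycle_arc List.length_map List.length_seq. Qed.

Lemma arc_hd n (c : nat -> V) i j x0 : (i < n)%N -> hd x0 (cycle_arc n c i j) = c i.
Proof. by move=> hi /=; rewrite addn0 modn_small. Qed.

Lemma arc_last n (c : nat -> V) i j x0 : (i < n)%N -> (j < n)%N ->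
  List.last (cycle_arc n c i j) x0 = c j.
Proof.
move=> hi hj; rewrite /cycle_arc last_map_seq; congr c.
case: (leqP i j) => hij.
- rewrite modn_arc_le // subnKC // modn_small //.
- rewrite modn_arc_gt //.
  have -> : (i + (j + n - i) = j + n)%N by lia.
  by rewrite modnDr modn_small.
Qed.

Lemma arc_in n (c : nat -> V) i j w : In w (cycle_arc n c i j) <->
  exists k, (k <= arcd n i j)%N /\ w = c ((i + k) %% n).
Proof. exact: in_map_seq. Qed.

Lemma arc_walk n (c : nat -> V) i j : is_cycle src tgt n c -> is_walk src tgt (cycle_arc n c i j).
Proof.
case=> hn [_ hadj]; apply: walk_map_seq => k _ _.
have := hadj ((i + k) %% n)%N; rewrite ltn_pmod; last lia.
move=> /(_ isT); congr adj; congr c.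
by rewrite -addn1 modnDml addn1 addnS.
Qed.

Lemma geo_le p q x0 : is_geodesic src tgt p -> is_walk src tgt q ->
  hd x0 q = hd x0 p -> List.last q x0 = List.last p x0 ->
  (List.length p <= List.length q)%coq_nat.
Proof. by case=> _ H; apply: H. Qed.

Lemma arc_dist n (c : nat -> V) a b q x0 L : geodetic_cycle src tgt n c -> (a < n)%N -> (b < n)%N ->
  is_walk src tgt q -> hd x0 q = c a -> List.last q x0 = c b ->
  (List.length q <= L.+1)%coq_nat ->
  (arcd n a b <= L)%N \/ (arcd n b a <= L)%N.
Proof.
move=> [hc hg] ha hb hq h1 h2 hl.
case: (hg a b ha hb) => hgeo.
- left; have := geo_le (x0:=x0) hgeo hq; rewrite arc_hd // arc_last // arc_len => /(_ h1 h2); lia.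
- right; have := geo_le (x0:=x0) hgeo (is_walk_rev hq).
  rewrite arc_hd // arc_last // arc_len hd_rev_last last_rev_hd => /(_ h2 h1).
  rewrite List.length_rev; lia.
Qed.

Lemma short_arc_geo n (c : nat -> V) i j : geodetic_cycle src tgt n c -> (i < n)%N -> (j < n)%N ->
  (arcd n i j < arcd n j i)%N -> is_geodesic src tgt (cycle_arc n c i j).
Proof.
move=> [hc hg] hi hj hlt.
case: (hg i j hi hj) => // hgeo; exfalso.
have := geo_le (x0:=c i) hgeo (is_walk_rev (arc_walk i j hc)).
rewrite hd_rev_last last_rev_hd !arc_hd // !arc_last // List.length_rev !arc_len.
move=> /(_ erefl erefl); lia.
Qed.

Lemma geodetic_bound n (c : nat -> V) (delta : nat) :
  (forall x0 (P Q S : list V), is_geodesic src tgt P -> is_geodesic src tgt Q -> is_geodesic src tgt S ->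
      List.last P x0 = hd x0 Q -> List.last Q x0 = hd x0 S -> List.last S x0 = hd x0 P ->
      forall v, In v P -> exists w, (In w Q \/ In w S) /\ dist_le src tgt v w delta) ->
  geodetic_cycle src tgt n c -> (n <= 6 * delta + 11)%N.
Proof.
move=> hyp hgc; case: (leqP n (6 * delta + 11)) => // hn; exfalso.
set k := (n %/ 3)%N.
have hk : (k * 3 <= n < k * 3 + 3)%N.
  have := divn_eq n 3; have := ltn_pmod n (isT : (0 < 3)%N); rewrite -/k; lia.
have d0k : arcd n 0 k = k by rewrite /arcd modn_arc_le //; lia.
have dk0 : arcd n k 0 = (n - k)%N by rewrite /arcd modn_arc_gt //; lia.
have dk2 : arcd n k (k + k) = k by rewrite /arcd modn_arc_le //; lia.
have d2k : arcd n (k + k) k = (n - k)%N by rewrite /arcd modn_arc_gt //; lia.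
have d20 : arcd n (k + k) 0 = (n - (k + k))%N by rewrite /arcd modn_arc_gt //; lia.
have d02 : arcd n 0 (k + k) = (k + k)%N by rewrite /arcd modn_arc_le //; lia.
have gP := short_arc_geo (i:=0) (j:=k) hgc ltac:(lia) ltac:(lia) ltac:(lia).
have gQ := short_arc_geo (i:=k) (j:=k+k) hgc ltac:(lia) ltac:(lia) ltac:(lia).
have gS := short_arc_geo (i:=k+k) (j:=0) hgc ltac:(lia) ltac:(lia) ltac:(lia).
set h := delta.+1.
have inP : In (c h) (cycle_arc n c 0 k).
  apply/arc_in; exists h; split; first lia.
  by rewrite add0n modn_small //; lia.
have [w [hw [p [hpw [hp1 [hp2 hpl]]]]]] :=
  hyp (c 0) _ _ _ gP gQ gS
    ltac:(rewrite arc_last ?arc_hd //; lia)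
    ltac:(rewrite arc_last ?arc_hd //; lia)
    ltac:(rewrite arc_last ?arc_hd //; lia) _ inP.
have [t [ht hwt]] : exists t, ((k <= t < n)%N \/ t = 0%N) /\ w = c t.
  case: hw => /arc_in [j [hj ->]].
  - exists (k + j)%N; rewrite modn_small; last lia.
    split => //; left; lia.
  - case: (ltnP (k + k + j) n) => hj2.
    + exists (k + k + j)%N; rewrite modn_small //; split => //; left; lia.
    + exists 0%N; split; first by right.
      have -> : (k + k + j = 0 + n)%N by lia.
      by rewrite modnDr mod0n.
subst w.
have := arc_dist (a := h) (b := t) (x0 := c h) hgc ltac:(lia) ltac:(lia) hpw.
move=> /(_ _ hp1 hwt hpl).
case: ht => [ht|->].
- rewrite /arcd modn_arc_le; last lia; last lia; last lia.
  rewrite modn_arc_gt; [lia|lia|lia|lia].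
- rewrite /arcd modn_arc_gt; [|lia|lia|lia].
  rewrite modn_arc_le; [lia|lia|lia|lia].
Qed.

End Cyc.

Unset Implicit Arguments.
Local Open Scope classical_set_scope.
Local Open Scope ring_scope.
Lemma unit_I_itv : unit_I = `[0%R, 1%R]%classic.
Proof.
rewrite set_itvcc; apply/seteqP; split => x /=.
- by case=> /RleP h1 /RleP h2; rewrite h1 h2.
- by move=> /andP[/RleP h1 /RleP h2].
Qed.

Lemma unit_I_compact : compact unit_I.
Proof. rewrite unit_I_itv; exact: segment_compact. Qed.

Lemma unit_I_connected : connected unit_I.
Proof. rewrite unit_I_itv; exact: segment_connected. Qed.

Lemma nbhs_plane (p : plane_pt) (U : set plane_pt) :
  nbhs p U <-> exists2 e : R, 0 < e & forall q : plane_pt,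
     `|p.1 - q.1| < e -> `|p.2 - q.2| < e -> U q.
Proof.
rewrite nbhs_ballP; split.
- by case=> e /= e0 H; exists e => // q h1 h2; apply: H.
- by case=> e e0 H; exists e => //= q [h1 h2]; apply: H.
Qed.

Lemma nbhs_R (x : R) (U : set R) :
  nbhs x U <-> exists2 e : R, 0 < e & forall y : R, `|x - y| < e -> U y.
Proof.
rewrite nbhs_ballP; split.
- by case=> e /= e0 H; exists e => // y h; apply: H.
- by case=> e e0 H; exists e => //= y h; apply: H.
Qed.

Lemma plane_hausdorff : hausdorff_space plane_pt.
Proof.
move=> p q; rewrite /cluster /meets /= => hcl.
have key : forall f : plane_pt -> R, (f = fst \/ f = snd) -> f p = f q.
  move=> f hf; apply: Rhausdorff; rewrite /cluster /meets /= => A B hA0 hB0.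
  have [e e0 hA] := (nbhs_R _ _).1 hA0.
  have [d d0 hB] := (nbhs_R _ _).1 hB0.
  have [z [/= z1 z2]] : [set z : plane_pt | A (f z)] `&` [set z | B (f z)] !=set0.
    apply: hcl; apply/nbhs_plane.
    + exists e => // z h1 h2; apply: hA; by case: hf => ->.
    + exists d => // z h1 h2; apply: hB; by case: hf => ->.
  by exists (f z).
case: p q hcl key => a b [c d] _ key.
have h1 := key fst (or_introl erefl); have h2 := key snd (or_intror erefl).
by simpl in h1, h2; rewrite h1 h2.
Qed.

Lemma pairl_continuous (a : R) : continuous (fun y : R => (a, y) : plane_pt).
Proof.
move=> y U /nbhs_plane [e e0 H]; apply/nbhs_R; exists e => // z hz.
by apply: H => //=; rewrite subrr normr0.
Qed.

Lemma pairr_continuous (b : R) : continuous (fun x : R => (x, b) : plane_pt).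
Proof.
move=> x U /nbhs_plane [e e0 H]; apply/nbhs_R; exists e => // z hz.
by apply: H => //=; rewrite subrr normr0.
Qed.

Lemma setX_connected (A B : set R) : connected A -> connected B ->
  connected (A `*` B : set plane_pt).
Proof.
move=> cA cB.
have [[b0 Bb0]|B0] := pselect (B !=set0); last first.
  have -> : (A `*` B : set plane_pt) = set0.
    by apply/seteqP; split => // -[x y] [_ By]; apply: B0; exists y.
  exact: connected0.
have [[a0 Aa0]|A0] := pselect (A !=set0); last first.
  have -> : (A `*` B : set plane_pt) = set0.
    by apply/seteqP; split => // -[x y] [Ax _]; apply: A0; exists x.
  exact: connected0.
set H := (fun x : R => (x, b0) : plane_pt) @` A.
set Vt := fun a : R => (fun y : R => (a, y) : plane_pt) @` B.
have cH : connected H.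
  apply: connected_continuous_connected => //.
  by move=> x; apply: continuous_subspaceT => z; apply: pairr_continuous.
have cV a : connected (Vt a).
  apply: connected_continuous_connected => //.
  by apply: continuous_subspaceT => z; apply: pairl_continuous.
have -> : (A `*` B : set plane_pt) = \bigcup_(a in A) (Vt a `|` H).
  apply/seteqP; split.
  - move=> [x y] [/= Ax By]; exists x => //; left; by exists y.
  - move=> [x y] [a Aa [[z Bz [<- <-]]|[z Az [<- <-]]]]; by split.
apply: bigcup_connected.
  exists (a0, b0) => a Aa; right; by exists a0.
move=> a Aa; apply: connectedU => //.
by exists (a, b0); split; [exists b0|exists a].
Qed.

Lemma ball_plane_connected (p : plane_pt) (e : R) :
  connected [set q : plane_pt | `|p.1 - q.1| < e /\ `|p.2 - q.2| < e].
Proof.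
have -> : [set q : plane_pt | `|p.1 - q.1| < e /\ `|p.2 - q.2| < e] =
   (ball p.1 e `*` ball p.2 e : set plane_pt) by [].
apply: setX_connected; rewrite ball_itv; exact/connected_intervalP/interval_is_interval.
Qed.

HB.instance Definition _ := Pointed.on (R * R)%type.

Lemma seq_preimage_list (V : Type) (pos : V -> plane_pt) :
  (forall u v, pos u = pos v -> u = v) ->
  forall s : seq plane_pt, exists l : list V, forall v, pos v \in s -> In v l.
Proof.
move=> inj; elim => [|x s [l Hl]]; first by exists nil.
case: (Classical_Prop.classic (exists v, pos v = x)) => [[v0 hv0]|nv].
- exists (v0 :: l) => v; rewrite in_cons => /orP [/eqP hx|hs].
  + by left; apply: inj; rewrite hv0 hx.
  + by right; apply: Hl.
- exists l => v; rewrite in_cons => /orP [/eqP hx|hs].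
  + by exfalso; apply: nv; exists v.
  + by apply: Hl.
Qed.

Lemma finite_vertices (V : Type) (pos : V -> plane_pt) :
  (forall u v, pos u = pos v -> u = v) ->
  (forall p : plane_pt, ~ limit_point (range pos) p) ->
  forall M : R, exists l : list V, forall v,
    Rle (Rabs (pos v).1) M -> Rle (Rabs (pos v).2) M -> In v l.
Proof.
move=> inj nlp M.
set Sq := (`[- M, M] `*` `[- M, M] : set plane_pt).
have cSq : compact Sq by apply: compact_setX; exact: segment_compact.
set f := fun x : plane_pt => [set y : plane_pt | exists U : set plane_pt,
   [/\ open U, U x, (forall v, U (pos v) -> pos v = x) & U y]].
have fo : forall x, Sq x -> open (f x).
  move=> x _; rewrite openE => y [U [oU Ux hU Uy]].
  rewrite /interior; apply: (@filterS _ _ _ U).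
    by move=> z Uz; exists U.
  by apply: open_nbhs_nbhs; split.
have fc : Sq `<=` cover Sq f.
  move=> x Sqx; exists x => //.
  have := nlp x; rewrite not_limit_pointE => -[X hnX hX].
  move: hnX; rewrite nbhsE => -[U [oU Ux] UX].
  exists U; split => // v Uv.
  have : (range pos `&` X) (pos v) by split; [exists v|apply: UX].
  by move/hX.
have cov : cover_compact Sq by move: cSq; rewrite (@compact_cover plane_pt).
have [D' _ hD'] := cov _ Sq f fo fc.
have [l hl] := @seq_preimage_list V pos inj (D' : seq plane_pt).
exists l => v h1 h2; apply: hl.
have : Sq (pos v).
  have ab : forall x : R, Rle (Rabs x) M -> (- M <= x <= M).
    move=> x hx; apply/andP; split; apply/RleP.
    - have := Rle_abs (- x); rewrite Rabs_Ropp => h. change (Rle (Ropp M) x). lra.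
    - have := Rle_abs x; lra.
  by split; rewrite /= in_itv /=; apply: ab.
move/hD' => [x /= hx [U [_ _ hU Uv]]].
by rewrite -(hU v Uv) in hx.
Qed.

Section Emb.
Variables (V E : Type) (src tgt : E -> V) (pos : V -> plane_pt) (arc : E -> R -> plane_pt).
Hypothesis emb : plane_embedding src tgt pos arc.

Lemma edge_image_connected e : connected (edge_image arc e).
Proof.
apply: connected_continuous_connected; first exact: unit_I_connected.
by case: emb => _ [h _].
Qed.

Lemma edge_image_closed e : closed (edge_image arc e).
Proof.
apply: compact_closed; first exact: plane_hausdorff.
apply: continuous_compact; last exact: unit_I_compact.
by case: emb => _ [h _].
Qed.

Variables (n : nat) (c : nat -> V).

Definition cv v := exists i, (i < n)%N /\ v = c i.

Definition Pe i e := (src e = c i /\ tgt e = c (i.+1 %% n)%N) \/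
                     (tgt e = c i /\ src e = c (i.+1 %% n)%N).

Definition Gi i := [set p : plane_pt | p = pos (c i) \/ exists e, Pe i e /\ edge_image arc e p].

Lemma Gi_closed i : simple_graph src tgt -> closed (Gi i).
Proof.
move=> [_ hs].
case: (Classical_Prop.classic (exists e, Pe i e)) => [[e0 he0]|ne].
- have -> : Gi i = [set pos (c i)] `|` edge_image arc e0.
    apply/seteqP; split => p.
    + case=> [->|[e [he hp]]]; [by left|right].
      suff -> : e0 = e by [].
      apply: hs; rewrite /Pe in he0 he; case: he0 => [[a1 a2]|[a1 a2]]; case: he => [[b1 b2]|[b1 b2]].
      * by left; rewrite a1 a2 b1 b2.
      * by right; rewrite a1 a2 b1 b2.
      * by right; rewrite a1 a2 b1 b2.
      * by left; rewrite a1 a2 b1 b2.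
    + by case=> [->|hp]; [left|right; exists e0].
  apply: closedU; last exact: edge_image_closed.
  apply: compact_closed; [exact: plane_hausdorff|exact: compact_set1].
- have -> : Gi i = [set pos (c i)].
    apply/seteqP; split => p; first by case=> [->//|[e [he _]]]; exfalso; apply: ne; exists e.
    by move=> ->; left.
  apply: compact_closed; [exact: plane_hausdorff|exact: compact_set1].
Qed.

Lemma cycle_image_closed : simple_graph src tgt -> closed (cycle_image src tgt pos arc n c).
Proof.
move=> hs.
have -> : cycle_image src tgt pos arc n c = [set p | exists i, (i < n)%N /\ Gi i p].
  apply/seteqP; split => p.
  - case=> [[i [hi ->]]|[e [[i [hi he]] hp]]]; exists i; split => //; [by left|right; by exists e].
  - case=> i [hi [->|[e [he hp]]]]; [left; by exists i|right; exists e; split => //; by exists i].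
suff H : forall m, closed [set p | exists i, (i < m)%N /\ Gi i p] by exact: H.
elim => [|m IH].
  have -> : [set p | exists i, (i < 0)%N /\ Gi i p] = set0.
    by apply/seteqP; split => // p [i [hi _]].
  exact: closed0.
have -> : [set p | exists i, (i < m.+1)%N /\ Gi i p] =
          [set p | exists i, (i < m)%N /\ Gi i p] `|` Gi m.
  apply/seteqP; split => p.
  - case=> i [hi hp]; rewrite ltnS leq_eqVlt in hi; case/orP: hi => [/eqP hi|hi]; [by right; rewrite -hi|left; by exists i].
  - case=> [[i [hi hp]]|hp]; [exists i; split => //; exact: ltnW|exists m; split => //].
exact: (closedU IH (Gi_closed m hs)).
Qed.
Lemma cycle_edge_ends e : cycle_edge src tgt n c e -> cv (src e) /\ cv (tgt e).
Proof.
case=> i [hi h].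
have hn : (0 < n)%N by case: n hi.
have hi1 : (i.+1 %% n < n)%N by rewrite ltn_pmod.
by case: h => [[-> ->]|[-> ->]]; split; [exists i|exists (i.+1 %% n)%N|exists (i.+1 %% n)%N|exists i].
Qed.

Lemma vert_not_cim v : ~ cv v -> ~ cycle_image src tgt pos arc n c (pos v).
Proof.
case: emb => inj [_ [_ [_ [hve _]]]] ncv.
case=> [[i [hi hp]]|[e [he [t ht hp]]]].
- by apply: ncv; exists i; split => //; apply: inj.
- have [h1 h2] := cycle_edge_ends _ he.
  by case: (hve v e t ht hp) => hv; apply: ncv; rewrite hv.
Qed.

Lemma edge_avoid e : ~ cv (src e) -> ~ cv (tgt e) ->
  forall t, unit_I t -> ~ cycle_image src tgt pos arc n c (arc e t).
Proof.
case: emb => inj [_ [_ [_ [hve hcr]]]] ns nt t ht.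
case=> [[i [hi hp]]|[e' [he' [s hs hp]]]].
- case: (hve (c i) e t ht hp) => h; [apply: ns|apply: nt]; by exists i; rewrite h.
- have [h1 h2] := cycle_edge_ends _ he'.
  case: (Classical_Prop.classic (e = e')) => [ee|ne].
    by apply: ns; rewrite ee.
  have [v [hv [hv1 hv2]]] := hcr e e' t s ne ht hs (esym hp).
  have cvv : cv v by case: hv2 => ->.
  by case: hv1 => hv1; [apply: ns|apply: nt]; rewrite -hv1.
Qed.
End Emb.

Lemma local_connected (O : set plane_pt) (x : plane_pt) : nbhs x O ->
  exists N : set plane_pt, [/\ nbhs x N, N `<=` O & connected N].
Proof.
move=> /nbhs_plane [e e0 H].
exists [set q : plane_pt | `|x.1 - q.1| < e /\ `|x.2 - q.2| < e]; split.
- by apply/nbhs_plane; exists e => // q h1 h2.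
- by move=> q [h1 h2]; apply: H.
- exact: ball_plane_connected.
Qed.

Lemma incident_list (V E : Type) (src tgt : E -> V) (D : nat) :
  (forall v : V, exists l : list E,
    (List.length l <= D)%coq_nat /\ forall e, (src e = v \/ tgt e = v) -> In e l) ->
  forall L : list V, exists le : list E, (List.length le <= D * List.length L)%N /\
    forall e, (exists v, In v L /\ (src e = v \/ tgt e = v)) -> In e le.
Proof.
move=> hD; elim => [|v L [le [hlen hle]]].
  by exists nil; split => // e [v [[] _]].
have [l [hl1 hl2]] := hD v.
exists (l ++ le)%list; split.
  rewrite List.length_app /=; lia.
move=> e [u [[<-|hu] he]]; apply/List.in_or_app; [left; exact: hl2|right; apply: hle; by exists u].
Qed.

Local Close Scope ring_scope.

Theorem corollary3p2 (V E : Type) (src tgt : E -> V)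
  (pos : V -> plane_pt) (arc : E -> R -> plane_pt) :
  simple_graph src tgt ->
  plane_embedding src tgt pos arc ->
  no_vertex_accumulation pos ->
  bounded_degree src tgt ->
  hyperbolic src tgt ->
  weakly_non_amenable src tgt ->
  (forall F, is_face pos arc F ->
     exists (n : nat) (c : nat -> V),
       geodetic_cycle src tgt n c /\ inside_cycle src tgt pos arc n c F) ->
  bounded_codegree pos arc.
Proof.
move=> hsimp hemb hnacc [D hD] [delta hyp] [f [fmono [fdiv hwna]]] hface.
have inj : forall u v, pos u = pos v -> u = v by case: hemb.
set N0 := (6 * delta + 11)%N.
exists (D * (f N0 + N0))%N => F hF _.
have [n [c [hgc hin]]] := hface F hF.
have hn : (n <= N0)%N := geodetic_bound hyp hgc.
case: hF => p0 [hp0 HF].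
have Fp0 : F p0 by rewrite HF; apply: connected_component_refl.
set Cim := cycle_image src tgt pos arc n c.
have CimG : forall q, Cim q -> graph_image pos arc q.
  move=> q [[i [_ ->]]|[e [_ [t ht <-]]]]; [left; by exists (c i)|right; by exists e, t].
have nCp0 : ~ Cim p0 by move/CimG.
have [M hM] : bounded_point_set (connected_component (~` Cim) p0).
  by case: (hin p0 Fp0) => [//|[_ hb]].
set K0 := connected_component (~` Cim) p0.
have FK : F `<=` K0.
  rewrite HF; apply: connected_component_max.
  - exact: connected_component_refl.
  - by move=> q /connected_component_sub hq /CimG.
  - exact: component_connected.
have KC : K0 `<=` ~` Cim by apply: connected_component_sub.
have [lv hlv] := @finite_vertices V pos inj hnacc M.
have [Sl [Snd [HS _]]] := classical_filter_nodup lv (fun v => K0 (pos v)).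
have HS' : forall v, In v Sl <-> K0 (pos v).
  move=> v; rewrite HS; split => [[]//|hv]; split => //.
  by have [h1 h2] := hM _ hv; apply: hlv.
set Cl := List.map c (List.seq 0 n).
have HCl : forall v, In v Cl <-> cv V n c v.
  move=> v; rewrite List.in_map_iff; split.
  - by case=> i [<- /List.in_seq hi]; exists i; split => //; lia.
  - by case=> i [hi ->]; exists i; split => //; apply/List.in_seq; lia.
have Kcv : forall v, K0 (pos v) -> ~ cv V n c v.
  by move=> v /KC hv [i [hi hvi]]; apply: hv; left; exists i; rewrite hvi.
have compK : forall q, K0 q -> connected_component (~` Cim) q = K0.
  by move=> q hq; rewrite /K0 (same_connected_component hq).
have bdry : forall u w, In u Sl -> adj src tgt u w -> ~ In w Sl -> cv V n c w.
  move=> u w /HS' hu [e he] hw; apply: NNPP => ncw.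
  have ncu := Kcv u hu.
  have [hsrc htgt] : (~ cv V n c (src e) /\ ~ cv V n c (tgt e)) /\
      (K0 (pos (src e)) \/ K0 (pos (tgt e))) /\ (pos w = pos (src e) \/ pos w = pos (tgt e)).
    by case: he => [[-> ->]|[-> ->]]; do !split => //; tauto.
  case: hsrc => ns nt.
  have av := @edge_avoid V E src tgt pos arc hemb n c e ns nt.
  have EI : edge_image arc e `<=` ~` Cim by move=> q [t ht <-]; apply: av.
  have [hs0 ht1] : arc e 0%R = pos (src e) /\ arc e 1%R = pos (tgt e) by case: hemb => _ [_ [_ [h _]]]; apply: h.
  have I0 : unit_I 0%R by split; [apply: Rle_refl|apply: Rle_0_1].
  have I1 : unit_I 1%R by split; [apply: Rle_0_1|apply: Rle_refl].
  have Es : edge_image arc e (pos (src e)) by rewrite -hs0; exists 0%R.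
  have Et : edge_image arc e (pos (tgt e)) by rewrite -ht1; exists 1%R.
  have EK : edge_image arc e `<=` K0.
    case: htgt => [[hK|hK] _].
    - rewrite -(compK _ hK); apply: connected_component_max => //; exact: (@edge_image_connected V E src tgt pos arc hemb e).
    - rewrite -(compK _ hK); apply: connected_component_max => //; exact: (@edge_image_connected V E src tgt pos arc hemb e).
  apply: hw; apply/HS'.
  by case: htgt => _ [->|->]; apply: EK.
have [Bl [Bnd [HB HBlen]]] := classical_filter_nodup Cl
   (fun w => ~ In w Sl /\ exists u, In u Sl /\ adj src tgt u w).
have HBw : forall w, In w Bl <-> (~ In w Sl /\ exists u, In u Sl /\ adj src tgt u w).
  move=> w; rewrite HB; split => [[]//|hP]; split => //.
  case: hP => hw [u [hu ha]]; apply/HCl; exact: (bdry u w hu ha hw).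
have Cllen : List.length Cl = n by rewrite List.length_map List.length_seq.
have Slen : (List.length Sl <= f N0)%N.
  have [->|Sne] := (@eqP _ (List.length Sl) 0%N); first by [].
  have Sne' : Sl <> [] by move=> h; apply: Sne; rewrite h.
  apply: leq_trans (hwna _ _ Sne' Snd Bnd HBw) _.
  apply: fmono; move: HBlen; rewrite Cllen; lia.
have [le [hlen hle]] := @incident_list V E src tgt D hD (Sl ++ Cl)%list.
exists le; split.
  move: hlen; rewrite List.length_app Cllen => h.
  have h2 : (List.length Sl + n <= f N0 + N0)%N by lia.
  have h3 := leq_mul (leqnn D) h2; lia.
move=> e heF; apply: hle; exists (src e); split; last by left.
apply/List.in_or_app.
case: (Classical_Prop.classic (cv V n c (src e))) => [hcv|ncv]; first by right; apply/HCl.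
left; apply/HS'.
have hs0 : arc e 0%R = pos (src e) by case: hemb => _ [_ [_ [h _]]]; case: (h e).
have I0 : unit_I 0%R by split; [apply: Rle_refl|apply: Rle_0_1].
have clF : closure F (pos (src e)) by apply: heF; rewrite -hs0; exists 0%R.
have nC := @vert_not_cim V E src tgt pos arc hemb n c (src e) ncv.
have oC : open (~` Cim) by apply: closed_openC; exact: (@cycle_image_closed V E src tgt pos arc hemb n c hsimp).
have nb : nbhs (pos (src e)) (~` Cim) by apply: open_nbhs_nbhs; split.
have [N [nbN NC cN]] := @local_connected _ _ nb.
have [q [Fq Nq]] := clF N nbN.
have Kq := FK q Fq.
rewrite -(compK q Kq); apply: (connected_component_max Nq NC cN).
exact: nbhs_singleton nbN.
Qed.
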